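(* In the setting described in the context, suppose that the matrix $J$ satisfies $\sup_{|i-j|\le R}|J_{i,j}|<\infty$ for every $R\ge0$. Then for every $\ell\ge0$, \[ \lim_{n\to\infty}\Big|\int_{\mathbb{R}}x^\ell\,d\nu_n(x)-\int_{\mathbb{R}}x^\ell\,d\eta_n(x)\Big|=0, \] and consequently $\lim_{n\to\infty}\big|\int f\,d\nu_n-\int f\,d\eta_n\big|=0$ for every polynomial $f\in\mathbb{R}[x]$.
   Context: Let $r\ge1$ and let $\mu_1,\dots,\mu_r$ be positive Borel measures on $\mathbb{R}$ with all moments finite, forming a perfect system: for every $\vec n\in\mathbb{N}_0^r$ there is a monic polynomial $P_{\vec n}$ of degree $|\vec n|=n_1+\dots+n_r$ with $\int x^kP_{\vec n}\,d\mu_j=0$ for $0\le k\le n_j-1$, $1\le j\le r$. Type I polynomials $A_{\vec n}=(A_{\vec n,1},\dots,A_{\vec n,r})$: $\deg A_{\vec n,j}\le n_j-1$, $\sum_j\int x^kA_{\vec n,j}\,d\mu_j=0$ for $0\le k\le|\vec n|-2$, and $=1$ for $k=|\vec n|-1$. Let $\mu$ be a positive measure with $\mu_j\ll\mu$, $w_j=d\mu_j/d\mu$, $Q_{\vec n}=\sum_jA_{\vec n,j}w_j$. Fix a path $(\vec n_\ell)_{\ell\ge0}$ with $|\vec n_\ell|=\ell$, $\vec n_{\ell+1}=\vec n_\ell+\vec e_{i_\ell}$ ($\vec e_j$ the $j$-th unit vector), and set $p_\ell=P_{\vec n_\ell}$, $q_\ell=Q_{\vec n_{\ell+1}}$, so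 that $\int p_\ell q_{\ell'}\,d\mu=\delta_{\ell,\ell'}$. The Christoffel--Darboux kernel is $K_n(x,y)=\sum_{j=0}^{n-1}p_j(x)q_j(y)$. Define $\nu_n=\frac1n\sum_{y:\,p_n(y)=0}\delta_y$ (zeros counted with multiplicity) and the signed measure $d\eta_n(x)=\frac1nK_n(x,x)\,d\mu(x)$. The matrix $J=[J_{\ell,k}]_{\ell,k\ge0}$ is defined by $xp_\ell=\sum_{k=0}^{\ell+1}J_{\ell,k}p_k$, $J_{\ell,k}=0$ for $k>\ell+1$. *)

(* Defs.v *)
From HB Require Import structures.
From mathcomp Require Import all_boot all_order all_algebra.
From mathcomp Require Import all_classical all_reals all_analysis.
From mathcomp Require Import complex.

Set Implicit Arguments.
Unset Strict Implicit.
Unset Printing Implicit Defensive.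

Import Order.TTheory GRing.Theory Num.Theory.
Import numFieldNormedType.Exports.
Local Open Scope classical_set_scope.
Local Open Scope ring_scope.

Definition mi_size (r : nat) (n : 'I_r -> nat) : nat := \sum_(j < r) n j.

(* The step-line path: i : nat -> 'I_r gives n_0 = 0, n_{l+1} = n_l + e_{i l}.
   Thus (n_l)_j = #{k < l | i k = j}. *)
Definition path_mi (r : nat) (i : nat -> 'I_r) (l : nat) : 'I_r -> nat :=
  fun j => \sum_(k < l) (i k == j : nat).

Definition typeII (R : realType) (r : nat) (mu : 'I_r -> {measure set R -> \bar R})
    (n : 'I_r -> nat) (P : {poly R}) : Prop :=
  P \is monic /\ size P = (mi_size n).+1 /\
  forall (j : 'I_r) (k : nat), (k < n j)%N ->
    Rintegral (mu j) setT (fun x => x ^+ k * P.[x]) = 0.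

Definition perfect (R : realType) (r : nat) (mu : 'I_r -> {measure set R -> \bar R}) : Prop :=
  forall n : 'I_r -> nat, exists! P : {poly R}, typeII mu n P.

(* Type I: deg A_j <= n_j - 1 (i.e. size A_j <= n_j), and
   sum_j int x^k A_j dmu_j = 0 for 0 <= k <= |n| - 2, = 1 for k = |n| - 1. *)
Definition typeI (R : realType) (r : nat) (mu : 'I_r -> {measure set R -> \bar R})
    (n : 'I_r -> nat) (A : 'I_r -> {poly R}) : Prop :=
  (forall j, (size (A j) <= n j)%N) /\
  forall k : nat,
    ((k.+2 <= mi_size n)%N ->
       \sum_(j < r) Rintegral (mu j) setT (fun x => x ^+ k * (A j).[x]) = 0) /\
    (k.+1 = mi_size n ->
       \sum_(j < r) Rintegral (mu j) setT (fun x => x ^+ k * (A j).[x]) = 1).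

Definition is_density (R : realType) (nu mu : {measure set R -> \bar R})
    (w : R -> R) : Prop :=
  measurable_fun setT w /\ (forall x, 0 <= w x) /\
  forall A : set R, measurable A -> nu A = (\int[mu]_(x in A) (w x)%:E)%E.

Definition Qfun (R : realType) (r : nat) (A : 'I_r -> {poly R}) (w : 'I_r -> R -> R)
    (x : R) : R := \sum_(j < r) (A j).[x] * w j x.

(* The zeros (in C = R[i], with multiplicity) of a real polynomial. *)
Definition zeros (R : realType) (p : {poly R}) : seq R[i] :=
  projT1 (closed_field_poly_normal (map_poly (real_complex R) p)).

(* int x^l dnu_n = (1/n) sum_{zeros y of p_n} y^l *)
Definition nu_poly_integral (R : realType) (p : {poly R}) (n : nat) (f : {poly R}) : R[i] :=
  (n%:R)^-1 * \sum_(y <- zeros p) (map_poly (real_complex R) f).[y].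

Definition finite_moments (R : realType) (nu : {measure set R -> \bar R}) : Prop :=
  forall k : nat, nu.-integrable setT (fun x => (x ^+ k)%:E).

Definition pseq (R : realType) (r : nat) (P : ('I_r -> nat) -> {poly R})
    (i : nat -> 'I_r) (l : nat) : {poly R} := P (path_mi i l).

Definition qseq (R : realType) (r : nat) (A : ('I_r -> nat) -> 'I_r -> {poly R})
    (w : 'I_r -> R -> R) (i : nat -> 'I_r) (l : nat) (x : R) : R :=
  Qfun (A (path_mi i l.+1)) w x.

Definition CDkernel (R : realType) (r : nat) (P : ('I_r -> nat) -> {poly R})
    (A : ('I_r -> nat) -> 'I_r -> {poly R}) (w : 'I_r -> R -> R)
    (i : nat -> 'I_r) (n : nat) (x y : R) : R :=
  \sum_(j < n) (pseq P i j).[x] * qseq A w i j y.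

(* int f d eta_n, with d eta_n = (1/n) K_n(x,x) d mu(x) *)
Definition eta_poly_integral (R : realType) (r : nat) (P : ('I_r -> nat) -> {poly R})
    (A : ('I_r -> nat) -> 'I_r -> {poly R}) (w : 'I_r -> R -> R)
    (m : {measure set R -> \bar R}) (i : nat -> 'I_r) (n : nat) (f : {poly R}) : R :=
  (n%:R)^-1 * Rintegral m setT (fun x => f.[x] * CDkernel P A w i n x x).

(* Main.v *)
Require Import Defs.
From HB Require Import structures.
From mathcomp Require Import all_boot all_order all_algebra.
From mathcomp Require Import all_classical all_reals all_analysis.
From mathcomp Require Import complex.
From mathcomp Require Import measurable_realfun lebesgue_integral.
From mathcomp Require Import zify.
From mathcomp Require Import mxred spectral.
Set Implicit Arguments.
Unset Strict Implicit.
Unset Printing Implicit Defensive.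
Import Order.TTheory GRing.Theory Num.Theory.
Import numFieldNormedType.Exports.
Local Open Scope classical_set_scope.
Local Open Scope ring_scope.
Section CoV.
Context (R : realType) (nu m : {measure set R -> \bar R}) (w : R -> R)
  (hw : is_density nu m w).
Local Open Scope ereal_scope.
Import HBNNSimple.

Lemma cov_ge0 (f : R -> \bar R) : (forall x, 0 <= f x) ->
  measurable_fun setT f ->
  \int[m]_x (f x * (w x)%:E) = \int[nu]_x f x.
Proof.
have [mw [w0 hnu]] := hw.
move=> f0 mf; set g := fun x => (w x)%:E.
have mE : measurable (@setT R) by [].
have mg : measurable_fun setT g by exact/measurable_EFinP.
pose h := nnsfun_approx mE mf.
have -> : \int[nu]_(x in setT) f x =
    lim (\int[nu]_(x in setT) (EFin \o h n) x @[n --> \oo]).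
  have fE x : setT x -> f x = lim ((EFin \o h n) x @[n --> \oo]).
    by move=> Ex; apply/esym/cvg_lim => //; exact: cvg_nnsfun_approx.
  under eq_integral => x /[!inE] /fE -> //.
  apply: monotone_convergence => //.
  - move=> n; apply/measurable_EFinP.
    by apply: (measurable_funS measurableT) => //; exact/measurable_funP.
  - by move=> n x Ex //=; rewrite lee_fin.
  - by move=> x Ex a b ab; rewrite lee_fin; exact/lefP/nd_nnsfun_approx.
have -> : \int[m]_(x in setT) (f \* g) x =
    lim (\int[m]_(x in setT) ((EFin \o h n) \* g) x @[n --> \oo]).
  have fg x : setT x -> f x * g x = lim (((EFin \o h n) \* g) x @[n --> \oo]).
    by move=> Ex; apply/esym/cvg_lim => //; apply: cvgeZr;
      [by []|exact: cvg_nnsfun_approx].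
  under eq_integral => x /[!inE] /fg -> //.
  apply: monotone_convergence => [//| | |].
  - move=> n; apply/emeasurable_funM => //.
    exact/measurable_EFinP.
  - by move=> n x Ex /=; rewrite mule_ge0 ?lee_fin.
  - by move=> x Ex a b ab/=; rewrite lee_wpmul2r ?lee_fin//; exact/lefP/nd_nnsfun_approx.
suff suf n : \int[m]_(x in setT) ((EFin \o h n) x * g x) =
    \int[nu]_(x in setT) (EFin \o h n) x.
  by under eq_fun do rewrite suf.
transitivity (\int[nu]_(x in setT)
   (\sum_(y \in range (h n)) (y * \1_(h n @^-1` [set y]) x)%:E)); last first.
  by apply: eq_integral => t tE; rewrite /= fimfunE -fsumEFin.
have indich k r : measurable_fun setT (fun x => (r * \1_(h k @^-1` [set r]) x)%:E).
  by apply: (measurable_comp measurableT) => //; exact: measurable_funM.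
rewrite ge0_integral_fsum//; last by move=> k y Ey; exact: nnfun_muleindic_ge0.
transitivity (\int[m]_(x in setT) (\sum_(y \in range (h n))
    (y * \1_(h n @^-1` [set y]) x)%:E * g x)).
  under [RHS]eq_integral => x xE.
    rewrite -ge0_mule_fsuml => [|y]; last exact: nnfun_muleindic_ge0.
    rewrite fsumEFin // -(fimfunE _ x); over.
  by [].
rewrite ge0_integral_fsum//; last 2 first.
  - move=> y; apply: emeasurable_funM => //.
  - by move=> k y Ey; apply: mule_ge0; [exact: nnfun_muleindic_ge0|rewrite lee_fin].
apply: eq_fsbigr => r rhn.
under [RHS]eq_integral do rewrite EFinM.
rewrite integralZl_indic_nnsfun => //.
under eq_integral do rewrite EFinM -muleA.
rewrite ge0_integralZl//.
- under eq_integral do rewrite muleC.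
  rewrite (eq_integral (g \_ (h n @^-1` [set r]))); last first.
    by move=> x xE; rewrite epatch_indic.
  rewrite -integral_mkcondr -hnu; last by rewrite setTI; exact: measurable_sfunP.
  by rewrite integral_indic// setIC.
- apply: emeasurable_funM => //; exact/measurable_EFinP.
- by move=> t Et; rewrite mule_ge0 ?lee_fin.
- by move: rhn; rewrite inE => -[t _ <-]; rewrite lee_fin.
Qed.
End CoV.
Section CoV2.
Context (R : realType) (nu m : {measure set R -> \bar R}) (w : R -> R)
  (hw : is_density nu m w).

Lemma cov_pos (f : R -> R) (x : R) : 
  ((EFin \o (fun y => (f y * w y)%R))^\+ x = (EFin \o f)^\+ x * (w x)%:E)%E.
Proof.
have [_ [w0 _]] := hw.
rewrite !funeposE /=; have [f0|f0] := leP 0 (f x).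
  by rewrite !max_l ?lee_fin ?mulr_ge0 // EFinM.
rewrite max_r ?lee_fin; last by rewrite nmulr_rle0 // ?ltW.
by rewrite max_r ?lee_fin ?mul0e // ltW.
Qed.

Lemma cov_neg (f : R -> R) (x : R) : 
  ((EFin \o (fun y => (f y * w y)%R))^\- x = (EFin \o f)^\- x * (w x)%:E)%E.
Proof.
have [_ [w0 _]] := hw.
rewrite !funenegE /=; have [f0|f0] := leP 0 (f x).
  rewrite max_r ?lee_fin ?oppr_le0 ?mulr_ge0 //.
  by rewrite max_r ?lee_fin ?mul0e ?oppr_le0.
rewrite max_l ?lee_fin ?oppr_ge0; last by rewrite nmulr_rle0 // ?ltW.
by rewrite max_l ?lee_fin ?oppr_ge0 ?ltW // -EFinM mulNr.
Qed.

Lemma cov (f : R -> R) : measurable_fun setT f ->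
  (\int[m]_x ((f x * w x)%R)%:E = \int[nu]_x (f x)%:E)%E.
Proof.
have [mw [w0 _]] := hw => mf.
rewrite integralE [in RHS]integralE.
have mfE : measurable_fun setT (EFin \o f) by exact/measurable_EFinP.
rewrite -(cov_ge0 hw); last 2 first.
- by move=> x; exact: funepos_ge0.
- exact: measurable_funepos.
rewrite -(cov_ge0 hw); last 2 first.
- by move=> x; exact: funeneg_ge0.
- exact: measurable_funeneg.
congr (_ - _)%E; apply: eq_integral => x _.
  exact: (cov_pos (fun y => f y)).
exact: (cov_neg (fun y => f y)).
Qed.

Lemma cov_int (f : R -> R) : measurable_fun setT f ->
  nu.-integrable setT (EFin \o f) ->
  m.-integrable setT (EFin \o (fun x => (f x * w x)%R)).
Proof.
have [mw [w0 _]] := hw => mf /integrableP [_ hf].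
apply/integrableP; split.
  by apply/measurable_EFinP; exact: measurable_funM.
rewrite (_ : (fun x => _) = (fun x => ((`|f x|)%:E * (w x)%:E)%E)); last first.
  by apply/funext => x /=; rewrite normrM (ger0_norm (w0 x)) EFinM.
rewrite (cov_ge0 hw) //.
apply/measurable_EFinP; exact: measurableT_comp.
Qed.

Lemma cov_R (f : R -> R) : measurable_fun setT f ->
  Rintegral m setT (fun x => f x * w x) = Rintegral nu setT f.
Proof. by move=> mf; rewrite /Rintegral (cov mf). Qed.

End CoV2.
Lemma eqRI (R : realType) (mu : {measure set R -> \bar R}) (g f : R -> R) :
  f =1 g -> Rintegral mu setT f = Rintegral mu setT g.
Proof. by move=> fg; apply: eq_Rintegral => x _; rewrite fg. Qed.

Section RS.
Context (R : realType) (mu : {measure set R -> \bar R}).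

Lemma intR_sum (I : Type) (s : seq I) (F : I -> R -> R) :
  (forall i, mu.-integrable setT (EFin \o F i)) ->
  mu.-integrable setT (EFin \o (fun x => \sum_(i <- s) F i x)) /\
  Rintegral mu setT (fun x => \sum_(i <- s) F i x) =
    \sum_(i <- s) Rintegral mu setT (F i).
Proof.
move=> hF; elim: s => [|a s [IHi IHe]].
  split.
    rewrite (_ : (EFin \o _) = (fun x => 0%:E)); last first.
      by apply/funext => x /=; rewrite big_nil.
    exact: integrable0.
  rewrite big_nil (@eqRI _ _ (fun _ => 0)); last by move=> x; rewrite big_nil.
  by rewrite Rintegral_cst // mul0r.
have hi : mu.-integrable setT (EFin \o (fun x => F a x + \sum_(i <- s) F i x)).
  by apply: (eq_integrable _ _ _ _ (integrableD _ (hF a) IHi)) => // x _ /=.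
split.
  rewrite (_ : (EFin \o _) = (EFin \o (fun x => F a x + \sum_(i <- s) F i x))) //.
  by apply/funext => x /=; rewrite big_cons.
rewrite big_cons -IHe -RintegralD //.
by apply: eqRI => x; rewrite big_cons.
Qed.

Lemma intR_Z (F : R -> R) c : mu.-integrable setT (EFin \o F) ->
  mu.-integrable setT (EFin \o (fun x => c * F x)).
Proof.
move=> h; rewrite (_ : (EFin \o _) = (fun x => c%:E * (EFin \o F) x)%E).
  exact: integrableZl.
by apply/funext => x /=; rewrite EFinM.
Qed.

Hypothesis hmom : finite_moments mu.

Lemma poly_int (q : {poly R}) : mu.-integrable setT (EFin \o (fun x => q.[x])).
Proof.
rewrite (_ : (fun x => q.[x]) = (fun x => \sum_(i < size q) q`_i * x ^+ i)).
  have [h _] := intR_sum (index_enum 'I_(size q)) (F := fun (i : 'I_(size q)) x => q`_i * x ^+ i) (fun i => ltac:(by apply: intR_Z; exact: hmom)).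
  exact: h.
by apply/funext => x; rewrite horner_coef.
Qed.

Definition Lf (q : {poly R}) := Rintegral mu setT (fun x => q.[x]).

Lemma Lf_sum (I : Type) (s : seq I) (c : I -> R) (q : I -> {poly R}) :
  Lf (\sum_(i <- s) c i *: q i) = \sum_(i <- s) c i * Lf (q i).
Proof.
rewrite /Lf (@eqRI _ _ (fun x => \sum_(i <- s) c i * (q i).[x])); last first.
  by move=> x; rewrite horner_sum; apply: eq_bigr => i _; rewrite hornerZ.
have [_ ->] := intR_sum s (F := fun i x => c i * (q i).[x]) (fun i => ltac:(by apply: intR_Z; exact: poly_int)).
apply: eq_bigr => i _; rewrite RintegralZl //; exact: poly_int.
Qed.

Lemma LfD p q : Lf (p + q) = Lf p + Lf q.
Proof.
rewrite /Lf -RintegralD //; try exact: poly_int.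
by apply: eq_Rintegral => x _; rewrite hornerD.
Qed.

Lemma LfZ c p : Lf (c *: p) = c * Lf p.
Proof.
rewrite /Lf -RintegralZl //; last exact: poly_int.
by apply: eq_Rintegral => x _; rewrite hornerZ.
Qed.

End RS.
Lemma sum_widen0 (V : nmodType) (m n : nat) (F : nat -> V) : (m <= n)%N ->
  (forall k, (m <= k < n)%N -> F k = 0) ->
  \sum_(k < n) F k = \sum_(k < m) F k.
Proof.
move=> mn h; rewrite -!(big_mkord xpredT) (big_cat_nat (leq0n m) mn) /=.
rewrite [X in _ + X]big1_seq ?addr0 // => k /andP[_]; rewrite mem_index_iota.
exact: h.
Qed.

Section Count.
Context (R : realType).

Lemma count_bound (f : nat -> R) (X : R) (c d : nat) :
  (forall k, `|f k| <= X) -> (forall k, (k < c)%N || (d < k)%N -> f k = 0) ->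
  forall N, `|\sum_(k < N) f k| <= (minn N d.+1 - c)%:R * X.
Proof.
move=> hX hz; have X0 : 0 <= X by apply: le_trans (hX 0%N).
elim=> [|N IH]; first by rewrite big_ord0 normr0 mulr_ge0.
rewrite big_ord_recr /=.
apply: le_trans (ler_normD _ _) _.
have [/andP [cN Nd]|] := boolP ((c <= N) && (N <= d))%N.
  have -> : (minn N.+1 d.+1 - c = (minn N d.+1 - c).+1)%N.
    by apply/eqP; rewrite -(eqn_add2r 0); lia.
  by rewrite -addn1 natrD mulrDl mul1r lerD.
move=> hN; rewrite hz; last by apply/orP; lia.
rewrite normr0 addr0; apply: le_trans IH _.
by apply: ler_wpM2r => //; rewrite ler_nat; lia.
Qed.

End Count.

Section Comb.
Context (R : realType) (J : nat -> nat -> R)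
  (hJ0 : forall l k, (l.+1 < k)%N -> J l k = 0)
  (hbd : forall Rad : nat, exists M : R, forall a b : nat,
        (a <= b + Rad)%N -> (b <= a + Rad)%N -> `|J a b| <= M).

Fixpoint G (lim : nat -> nat) (l a b : nat) : R :=
  match l with
  | 0 => (a == b)%:R
  | l'.+1 => \sum_(k < lim a) J a k * G lim l' k b
  end.

Lemma G0 lim l a b : (a + l < b)%N -> G lim l a b = 0.
Proof.
elim: l a => [|l IH] a /=; first by rewrite addn0 => /ltn_eqF ->.
move=> h; apply: big1 => k _.
have [ka|ka] := leqP k a.+1.
  by rewrite IH ?mulr0 //; lia.
by rewrite hJ0 ?mul0r.
Qed.

Lemma Gbound l : forall D, exists B : R, forall lim a b,
  (a <= b + D)%N -> `|G lim l a b| <= B.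
Proof.
elim: l => [|l IH] D.
  by exists 1 => lim a b _ /=; case: (a == b); rewrite ?normr1 ?normr0.
have [B' hB'] := IH D.+1.
have [M hM] := hbd (D + l + 1)%N.
set M' := Num.max M 0; set B'' := Num.max B' 0.
have M'0 : 0 <= M' by rewrite le_max lexx orbT.
have B''0 : 0 <= B'' by rewrite le_max lexx orbT.
exists ((D + l + 2)%:R * (M' * B'')) => lim a b hab /=.
have := @count_bound R (fun k => if (k < lim a)%N then J a k * G lim l k b else 0)
  (M' * B'') (b - l) a.+1.
move=> /(_ _ _ (lim a)) H.
rewrite (eq_bigr (fun k : 'I_(lim a) => (fun k => if (k < lim a)%N then J a k * G lim l k b else 0) k)); last first.
  by move=> k _; rewrite ltn_ord.
apply: le_trans (H _ _) _.
- move=> k; case: ifP => _; last by rewrite normr0 mulr_ge0.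
  have [hk|hk] := boolP ((b - l <= k) && (k <= a.+1))%N.
    rewrite normrM ler_pM //.
      apply: le_trans (hM _ _ _ _) _; try lia.
      by rewrite le_max lexx.
    apply: le_trans (hB' _ _ _ _) _; first lia.
    by rewrite le_max lexx.
  move: hk; rewrite negb_and -!ltnNge => /orP [hk|hk].
    by rewrite G0 ?mulr0 ?normr0 ?mulr_ge0 //; lia.
  by rewrite hJ0 ?mul0r ?normr0 ?mulr_ge0.
- move=> k /orP [hk|hk]; case: ifP => // _.
    by rewrite G0 ?mulr0 //; lia.
  by rewrite hJ0 ?mul0r.
- apply: ler_wpM2r; first exact: mulr_ge0.
  by rewrite ler_nat; lia.
Qed.

Lemma Geq n l : forall a b, (a + l < n)%N ->
  G (fun _ => n) l a b = G (fun a => a.+2) l a b.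
Proof.
elim: l => [|l IH] a b h //=.
rewrite (sum_widen0 (m := a.+2) (F := fun k => J a k * G (fun _ => n) l k b)); last 2 first.
- lia.
- by move=> k hk; rewrite hJ0 ?mul0r //; lia.
apply: eq_bigr => k _; rewrite IH //.
have := ltn_ord k; lia.
Qed.

Lemma trace_diff l : exists C : R, forall n,
  `|\sum_(a < n) (G (fun _ => n) l a a - G (fun a => a.+2) l a a)| <= C.
Proof.
have [B hB] := Gbound l 0.
exists (l%:R * (B + B)) => n.
rewrite (eq_bigr (fun a : 'I_n => (fun a => if (a < n)%N then
   G (fun _ => n) l a a - G (fun a => a.+2) l a a else 0) a)); last first.
  by move=> a _; rewrite ltn_ord.
apply: le_trans (@count_bound R (fun a => if (a < n)%N then
   G (fun _ => n) l a a - G (fun a => a.+2) l a a else 0) (B + B) (n - l) n.-1 _ _ n) _.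
- move=> k; case: ifP => _.
    apply: le_trans (ler_normB _ _) _; apply: lerD; apply: hB; lia.
  by rewrite normr0 addr_ge0 // (le_trans _ (hB (fun _ => 0%N) 0%N 0%N _)).
- move=> k /orP [hk|hk]; case: ifP => // hkn.
    by rewrite Geq ?subrr //; lia.
  lia.
- apply: ler_wpM2r.
    by rewrite addr_ge0 // (le_trans _ (hB (fun _ => 0%N) 0%N 0%N _)).
  by rewrite ler_nat; lia.
Qed.

End Comb.
Lemma mi_size_path r (i : nat -> 'I_r) l : mi_size (path_mi i l) = l.
Proof.
rewrite /mi_size /path_mi exchange_big /=.
rewrite (eq_bigr (fun _ => 1%N)); first by rewrite sum1_card card_ord.
move=> k _; rewrite (bigD1 (i k)) //= eqxx big1 ?addn0 // => j.
by rewrite eq_sym => /negbTE ->.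
Qed.

Lemma path_mono r (i : nat -> 'I_r) j k t : (j <= k)%N -> (path_mi i j t <= path_mi i k t)%N.
Proof.
move=> jk; rewrite /path_mi -!(big_mkord xpredT (fun l => nat_of_bool (i l == t))).
by rewrite (big_cat_nat (leq0n j) jk) /= leq_addr.
Qed.

Section Poly.
Context (R : realType) (r : nat) (mu : 'I_r -> {measure set R -> \bar R})
  (hmom : forall j, finite_moments (mu j))
  (P : ('I_r -> nat) -> {poly R}) (hP : forall n, typeII mu n (P n))
  (A : ('I_r -> nat) -> 'I_r -> {poly R}) (hA : forall n, typeI mu n (A n))
  (i : nat -> 'I_r) (J : nat -> nat -> R)
  (hJ : forall l, 'X * pseq P i l = \sum_(k < l.+2) J l k *: pseq P i k)
  (hJ0 : forall l k, (l.+1 < k)%N -> J l k = 0).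

Local Notation p := (pseq P i).
Local Notation L t := (Lf (mu t)).
Local Notation Ap j t := (A (path_mi i j.+1) t).

Lemma size_p l : size (p l) = l.+1.
Proof. by have [_ [-> _]] := hP (path_mi i l); rewrite mi_size_path. Qed.

Lemma monic_p l : p l \is monic.
Proof. by have [] := hP (path_mi i l). Qed.

Lemma sum_delta (V : lmodType R) N a (F : nat -> V) : (a < N)%N ->
  \sum_(b < N) (a == b)%:R *: F b = F a.
Proof.
move=> aN; rewrite (bigD1 (Ordinal aN)) //= eqxx scale1r big1 ?addr0 //.
move=> b /negbTE hb; suff -> : (a == b) = false by rewrite scale0r.
by apply/negbTE; apply: contraFN hb => /eqP hab; apply/eqP/val_inj.
Qed.

Lemma Xp l : forall a N, (a + l < N)%N ->
  'X^l * p a = \sum_(b < N) G J (fun a => a.+2) l a b *: p b.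
Proof.
elim: l => [|l IH] a N h.
  by rewrite expr0 mul1r /= sum_delta //; lia.
rewrite exprSr -mulrA hJ mulr_sumr /=.
rewrite (eq_bigr (fun k : 'I_a.+2 => J a k *: \sum_(b < N) G J (fun a => a.+2) l k b *: p b)); last first.
  move=> k _; rewrite -scalerAr (IH k N) //; have := ltn_ord k; lia.
rewrite (eq_bigr (fun k : 'I_a.+2 => \sum_(b < N) (J a k * G J (fun a => a.+2) l k b) *: p b)); last first.
  by move=> k _; rewrite scaler_sumr; apply: eq_bigr => b _; rewrite scalerA.
rewrite exchange_big /=; apply: eq_bigr => b _.
by rewrite scaler_suml.
Qed.

Lemma polyE (q : {poly R}) : q = \sum_(s < size q) q`_s *: 'X^s.
Proof. by rewrite -poly_def coefK. Qed.

Lemma L_Xp t s b : L t ('X^s * p b) = Rintegral (mu t) setT (fun x => x ^+ s * (p b).[x]).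
Proof. by rewrite /Lf; apply: eqRI => x; rewrite hornerM hornerXn. Qed.

Lemma biorth b j : \sum_(t < r) L t (p b * Ap j t) = (b == j)%:R.
Proof.
have [jb|bj] := ltnP j b.
  rewrite big1; last first.
    move=> t _; rewrite [X in p b * X]polyE mulr_sumr.
    rewrite (eq_bigr (fun s : 'I_(size (Ap j t)) => (Ap j t)`_s *: ('X^s * p b))); last first.
      by move=> s _; rewrite -scalerAr mulrC.
    rewrite Lf_sum; last exact: hmom.
    apply: big1 => s _; rewrite L_Xp.
    have [_ [_ h]] := hP (path_mi i b); rewrite h ?mulr0 //.
    have [hs _] := hA (path_mi i j.+1).
    apply: leq_trans (ltn_ord s) _; apply: leq_trans (hs t) _.
    exact: path_mono.
  by rewrite (gtn_eqF jb).
rewrite (eq_bigr (fun t : 'I_r => \sum_(s < size (p b)) (p b)`_s * L t ('X^s * Ap j t))); last first.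
  move=> t _; rewrite [X in X * _]polyE mulr_suml.
  rewrite (eq_bigr (fun s : 'I_(size (p b)) => (p b)`_s *: ('X^s * Ap j t))); last first.
    by move=> s _; rewrite -scalerAl.
  by rewrite Lf_sum //; exact: hmom.
rewrite exchange_big /=.
rewrite (eq_bigr (fun s : 'I_(size (p b)) => (s == j :> nat)%:R * (p b)`_s)); last first.
  move=> s _; rewrite -mulr_sumr mulrC; congr (_ * _).
  rewrite (eq_bigr (fun t : 'I_r => Rintegral (mu t) setT (fun x => x ^+ s * (Ap j t).[x]))); last first.
    by move=> t _; rewrite /Lf; apply: eqRI => x; rewrite hornerM hornerXn.
  have [_ hI] := hA (path_mi i j.+1); rewrite mi_size_path in hI.
  have hs : (s <= j)%N by have := ltn_ord s; rewrite {2}size_p; lia.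
  have [sj|sj] := eqVneq (s : nat) j.
    by rewrite sj; apply: (proj2 (hI j)).
  by apply: (proj1 (hI s)); rewrite ltnS ltn_neqAle sj hs.
have [bj'|bj'] := eqVneq b j; last first.
  rewrite big1 // => s _; rewrite ltn_eqF ?mul0r //.
  have := ltn_ord s; rewrite {2}size_p => hs.
  have : (b < j)%N by rewrite ltn_neqAle bj' bj.
  lia.
subst b; have hjs : (j < size (p j))%N by rewrite size_p.
rewrite (bigD1 (Ordinal hjs)) //= eqxx mul1r big1 ?addr0; last first.
  move=> s /negbTE hs; suff -> : (s == j :> nat) = false by rewrite mul0r.
  by apply: contraFF hs => /eqP h; apply/eqP/val_inj.
by have := monic_p j => /monicP; rewrite lead_coefE size_p.
Qed.

Lemma L_Xl_diag l j : \sum_(t < r) L t ('X^l * p j * Ap j t) = G J (fun a => a.+2) l j j.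
Proof.
rewrite (@Xp l j (j + l).+1); last lia.
rewrite (eq_bigr (fun t : 'I_r => \sum_(b < (j + l).+1) G J (fun a => a.+2) l j b * L t (p b * Ap j t))); last first.
  move=> t _; rewrite mulr_suml.
  rewrite (eq_bigr (fun b : 'I_(j + l).+1 => G J (fun a => a.+2) l j b *: (p b * Ap j t))); last first.
    by move=> b _; rewrite scalerAl.
  by rewrite Lf_sum //; exact: hmom.
rewrite exchange_big /=.
rewrite (eq_bigr (fun b : 'I_(j + l).+1 => (j == b)%:R *: G J (fun a => a.+2) l j b)); last first.
  by move=> b _; rewrite -mulr_sumr biorth eq_sym mulrC.
by rewrite (sum_delta (fun b => G J (fun a => a.+2) l j b)) //; lia.
Qed.

Context (m : {measure set R -> \bar R}) (w : 'I_r -> R -> R)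
  (hw : forall j, is_density (mu j) m (w j)).

Lemma mhorner (q : {poly R}) : measurable_fun setT (fun x => q.[x]).
Proof. exact: continuous_measurable_fun (continuous_horner (p := q)). Qed.

Lemma wint t (q : {poly R}) : m.-integrable setT (EFin \o (fun x => q.[x] * w t x)).
Proof. apply: (cov_int (hw t)); [exact: mhorner|exact: poly_int]. Qed.

Lemma wR t (q : {poly R}) : Rintegral m setT (fun x => q.[x] * w t x) = L t q.
Proof. exact: (cov_R (hw t) (mhorner q)). Qed.

Lemma eta_eq f n : eta_poly_integral P A w m i n f =
  n%:R^-1 * \sum_(j < n) \sum_(t < r) L t (f * p j * Ap j t).
Proof.
rewrite /eta_poly_integral; congr (_ * _).
rewrite (@eqRI _ m (fun x => \sum_(j < n) \sum_(t < r) (f * p j * Ap j t).[x] * w t x)); last first.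
  move=> x; rewrite /CDkernel /qseq /Qfun mulr_sumr; apply: eq_bigr => j _.
  rewrite !mulr_sumr; apply: eq_bigr => t _.
  by rewrite !hornerM !mulrA.
have hj : forall j : 'I_n, m.-integrable setT (EFin \o (fun x => \sum_(t < r) (f * p j * Ap j t).[x] * w t x)).
  move=> j; have [h _] := intR_sum (index_enum 'I_r) (F := fun t x => (f * p j * Ap j t).[x] * w t x) (fun t => wint t _).
  exact: h.
have [_ ->] := intR_sum (index_enum 'I_n) (F := fun j x => \sum_(t < r) (f * p j * Ap j t).[x] * w t x) hj.
apply: eq_bigr => j _.
have [_ ->] := intR_sum (index_enum 'I_r) (F := fun t x => (f * p j * Ap j t).[x] * w t x) (fun t => wint t _).
by apply: eq_bigr => t _; rewrite wR.
Qed.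

End Poly.
Section Mx.
Context (F : comNzRingType).

Lemma trig_pow n (T : 'M[F]_n) l : is_trig_mx T ->
  is_trig_mx (T ^+ l) /\ forall k, (T ^+ l) k k = (T k k) ^+ l.
Proof.
move=> /is_trig_mxP hT; elim: l => [|l [/is_trig_mxP IH1 IH2]].
  split; first exact: scalar_mx_is_trig.
  by move=> k; rewrite expr0 mxE eqxx.
split.
  apply/is_trig_mxP => a b ab; rewrite exprS -mulmxE mxE big1 // => k _.
  have [ak|ka] := ltnP a k; first by rewrite hT ?mul0r.
  by rewrite IH1 ?mulr0 //; apply: leq_ltn_trans ab.
move=> k; rewrite exprS -mulmxE mxE (bigD1 k) //= big1 ?addr0; first by rewrite IH2 exprS.
move=> a /negbTE ha; have [ka|ak] := ltnP k a; first by rewrite hT ?mul0r.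
rewrite IH1 ?mulr0 //; rewrite ltn_neqAle ak andbT.
by apply: contraFN ha => /eqP h; apply/eqP/val_inj.
Qed.

Lemma map_mx_pow (G : comNzRingType) (f : {rmorphism F -> G}) n (A : 'M[F]_n) l :
  map_mx f (A ^+ l) = (map_mx f A) ^+ l.
Proof.
elim: l => [|l IH]; first by rewrite !expr0 map_mx1.
by rewrite !exprS -!mulmxE map_mxM IH.
Qed.

End Mx.

Lemma conj_pow (C : fieldType) n (P A : 'M[C]_n) l : P \in unitmx ->
  (P *m A *m invmx P) ^+ l = P *m (A ^+ l) *m invmx P.
Proof.
move=> Pu; elim: l => [|l IH].
  by rewrite !expr0 -[1 in RHS]/(1%:M) mulmx1 mulmxV.
by rewrite exprS IH -!mulmxE !mulmxA mulmxKV // exprS -mulmxE !mulmxA.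
Qed.

Lemma char_conj (C : fieldType) n (P A : 'M[C]_n) : P \in unitmx ->
  char_poly (P *m A *m invmx P) = char_poly A.
Proof.
move=> Pu; rewrite /char_poly.
set P' := map_mx polyC P; set Q' := map_mx polyC (invmx P).
have PQ : P' *m Q' = 1%:M by rewrite -map_mxM mulmxV // map_mx1.
have -> : char_poly_mx (P *m A *m invmx P) = P' *m char_poly_mx A *m Q'.
  rewrite /char_poly_mx mulmxBr mulmxBl !map_mxM -/P' -/Q'.
  congr (_ - _); rewrite -mulmxA mul_scalar_mx -scalemxAr PQ scalemx1 //.
rewrite !det_mulmx mulrC mulrA -det_mulmx.
rewrite (_ : Q' *m P' = 1%:M) ?det1 ?mul1r //.
by rewrite -map_mxM mulVmx // map_mx1.
Qed.

Section Trace.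
Context (R : realType) (p : nat -> {poly R}) (J : nat -> nat -> R)
  (hJ : forall l, 'X * p l = \sum_(k < l.+2) J l k *: p k)
  (hJ0 : forall l k, (l.+1 < k)%N -> J l k = 0)
  (hmon : forall l, p l \is monic) (hsize : forall l, size (p l) = l.+1).

Definition JM n : 'M[R]_n := \matrix_(a, b) J a b.

Lemma JM_pow n l (a b : 'I_n) : (JM n ^+ l) a b = G J (fun _ => n) l a b.
Proof.
elim: l a b => [|l IH] a b.
  by rewrite expr0 mxE.
rewrite exprS -mulmxE mxE /=; apply: eq_bigr => k _.
by rewrite IH mxE.
Qed.

Lemma p0 : p 0 = 1.
Proof.
have /size_poly1P [c c0 hc] : size (p 0) == 1%N by rewrite hsize.
by have := monicP (hmon 0); rewrite hc lead_coefC => ->.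
Qed.

Lemma charJ n : char_poly (JM n) = p n.
Proof.
case: n => [|n'].
  by rewrite p0 /char_poly det_mx00.
set n := n'.+1.
set X := char_poly_mx (JM n).
pose v : 'cV[{poly R}]_n := \col_(a < n) p a.
pose u : 'cV[{poly R}]_n := \col_(a < n) (if (a == n' :> nat) then (J n' n)%:P else 0).
have Xv : X *m v = p n *: u.
  apply/matrixP => a z; rewrite !mxE.
  rewrite (eq_bigr (fun b : 'I_n => ('X *+ (a == b) - (J a b)%:P) * p b)); last first.
    by move=> b _; rewrite !mxE.
  rewrite (eq_bigr (fun b : 'I_n => ('X * p b) *+ (a == b) - J a b *: p b)); last first.
    by move=> b _; rewrite mulrBl mulrnAl mul_polyC.
  rewrite sumrB (bigD1 a) //= eqxx mulr1n big1 ?addr0; last first.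
    by move=> b /negbTE; rewrite eq_sym => ->.
  rewrite hJ.
  case: ifP => [/eqP ha|ha].
    rewrite -!(big_mkord xpredT (fun k => J a k *: p k)) /= ha.
    rewrite big_nat_recr //= [X in X - _]addrC addrK.
    by rewrite mulrC mul_polyC.
  rewrite mulr0; apply/eqP; rewrite subr_eq0; apply/eqP.
  rewrite (@sum_widen0 _ a.+2 n (fun k => J a k *: p k)) //.
    have := ltn_ord a; move: ha; rewrite /n; move/negbT => ha; lia.
  by move=> k hk; rewrite hJ0 ?scale0r //; lia.
have hadj : (\det X)%:M *m v = p n *: (\adj X *m u).
  by rewrite -mul_adj_mx -mulmxA Xv scalemxAr.
have := congr1 (fun M : 'cV[{poly R}]_n => M (@ord0 n') (@ord0 0)) hadj.
rewrite mul_scalar_mx !mxE p0 mulr1 => hdet.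
have hdv : p n %| char_poly (JM n) by rewrite /char_poly -/X hdet dvdp_mulIl.
apply/eqP; rewrite eq_sym -eqp_monic ?unfold_in ?hmon ?char_poly_monic //.
  by rewrite -dvdp_size_eqp // size_char_poly hsize.
  exact: hmon.
exact: char_poly_monic.
Qed.

Local Notation phi := (real_complex R).

Lemma trace_zeros n l : \sum_(y <- zeros (p n)) y ^+ l =
  phi (\sum_(a < n) G J (fun _ => n) l a a).
Proof.
set A := map_mx phi (JM n).
have [Pm Pu /allP hT] := @cotrigonalization _ n [:: A] (fun A B hA hB => ltac:(
  by move: hA hB; rewrite !inE => /eqP -> /eqP ->)).
have Pu' := unitarymx_unit Pu.
have := hT A (mem_head _ _); rewrite /= /similar_to conjumx //.
set T := Pm *m A *m invmx Pm => Tt.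
have hchar : char_poly T = map_poly phi (p n) by rewrite char_conj // -map_char_poly charJ.
have hl : lead_coef (map_poly phi (p n)) = 1 by apply/monicP; rewrite map_monic.
have hz : map_poly phi (p n) = \prod_(z <- zeros (p n)) ('X - z%:P).
  rewrite /zeros; case: closed_field_poly_normal => s /= {1}->.
  by rewrite hl scale1r.
rewrite -hchar char_poly_trig // in hz.
have hperm : perm_eq (zeros (p n)) [seq T k k | k <- index_enum 'I_n].
  by apply: prod_XsubC_eq; rewrite -hz big_map.
rewrite (perm_big _ hperm) big_map.
have [_ hTl] := trig_pow l Tt.
rewrite (eq_bigr (fun k => (T ^+ l) k k)); last by move=> k _; rewrite hTl.
rewrite -/(mxtrace (T ^+ l)).
rewrite /T conj_pow //.
rewrite mxtrace_mulC mulmxA mulVmx // mul1mx /A -map_mx_pow trace_map_mx.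
congr phi; rewrite /mxtrace; apply: eq_bigr => a _; exact: JM_pow.
Qed.

End Trace.
Section S. Context (R : realType).
Lemma lim_bound (u : nat -> R) C : (forall n, 0 <= u n) ->
  (forall n, u n <= C * n%:R^-1) -> u @ \oo --> 0.
Proof.
move=> u0 uC; rewrite -cvg_shiftS /=.
apply: (@squeeze_cvgr _ _ _ _ (fun _ => 0) (fun n => C * harmonic n)).
- near=> n; apply/andP; split; [exact: u0|exact: uC].
- exact: cvg_cst.
- by rewrite -(mulr0 C); apply: cvgMr; exact: cvg_harmonic.
Unshelve. all: by end_near.
Qed.
End S.
Lemma normc_real (R : realType) (x : R) : Normc.normc (x%:C)%C = `|x|.
Proof. by rewrite /Normc.normc /= expr0n /= addr0 sqrtr_sqr. Qed.

Section Final.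
Context (R : realType) (r : nat)
    (mu : 'I_r -> {measure set R -> \bar R})
    (hmom : forall j, finite_moments (mu j))
    (P : ('I_r -> nat) -> {poly R}) (hP : forall n, typeII mu n (P n))
    (A : ('I_r -> nat) -> 'I_r -> {poly R}) (hA : forall n, typeI mu n (A n))
    (m : {measure set R -> \bar R}) (w : 'I_r -> R -> R)
    (hw : forall j, is_density (mu j) m (w j))
    (i : nat -> 'I_r)
    (J : nat -> nat -> R)
    (hJ : forall l, 'X * pseq P i l = \sum_(k < l.+2) J l k *: pseq P i k)
    (hJ0 : forall l k, (l.+1 < k)%N -> J l k = 0)
    (hbd : forall Rad : nat, exists M : R, forall a b : nat,
        (a <= b + Rad)%N -> (b <= a + Rad)%N -> `|J a b| <= M).

Local Notation phi := (real_complex R).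

Definition dd n l := n%:R^-1 *
  \sum_(a < n) (G J (fun _ => n) l a a - G J (fun a => a.+2) l a a).

Lemma key f n : nu_poly_integral (pseq P i n) n f - (eta_poly_integral P A w m i n f)%:C%C
  = (\sum_(l < size f) f`_l * dd n l)%:C%C.
Proof.
have hmon l : pseq P i l \is monic by exact: monic_p.
have hsize l : size (pseq P i l) = l.+1 by exact: size_p.
have Hnu : nu_poly_integral (pseq P i n) n f =
    phi (n%:R^-1 * \sum_(l < size f) f`_l * \sum_(a < n) G J (fun _ => n) l a a).
  rewrite /nu_poly_integral rmorphM /= fmorphV rmorph_nat; congr (_ * _).
  rewrite (eq_bigr (fun y => \sum_(l < size f) phi f`_l * y ^+ l)); last first.
    move=> y _; rewrite horner_coef size_map_poly; apply: eq_bigr => l _.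
    by rewrite coef_map.
  rewrite exchange_big rmorph_sum /=; apply: eq_bigr => l _.
  by rewrite -mulr_sumr (trace_zeros hJ hJ0 hmon hsize) rmorphM.
have Heta : eta_poly_integral P A w m i n f =
    n%:R^-1 * \sum_(l < size f) f`_l * \sum_(j < n) G J (fun a => a.+2) l j j.
  rewrite (eta_eq hmom P A i hw); congr (_ * _).
  rewrite (eq_bigr (fun j : 'I_n => \sum_(l < size f) f`_l *
      \sum_(t < r) Lf (mu t) ('X^l * pseq P i j * A (path_mi i j.+1) t))); last first.
    move=> j _; rewrite (eq_bigr (fun t : 'I_r => \sum_(l < size f) f`_l *
      Lf (mu t) ('X^l * pseq P i j * A (path_mi i j.+1) t))); last first.
      move=> t _; rewrite {1}(polyE f) !mulr_suml.
      rewrite (eq_bigr (fun l : 'I_(size f) => f`_l *: ('X^l * pseq P i j * A (path_mi i j.+1) t))); last first.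
        by move=> l _; rewrite -!scalerAl.
      by rewrite Lf_sum //; exact: hmom.
    by rewrite exchange_big /=; apply: eq_bigr => l _; rewrite mulr_sumr.
  rewrite exchange_big /=; apply: eq_bigr => l _; rewrite -mulr_sumr.
  by congr (_ * _); apply: eq_bigr => j _; rewrite (L_Xl_diag hmom hP hA hJ).
rewrite Hnu Heta -rmorphB; congr phi.
rewrite /dd -mulrBr -sumrB mulr_sumr; apply: eq_bigr => l _.
by rewrite -mulrBr sumrB mulrCA.
Qed.

Lemma dd_bound l : exists C : R, forall n, `|dd n l| <= C * n%:R^-1.
Proof.
have [C hC] := trace_diff hJ0 hbd l.
exists C => n; rewrite /dd normrM ger0_norm ?invr_ge0 ?ler0n // mulrC.
by apply: ler_wpM2r; rewrite ?invr_ge0 ?ler0n.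
Qed.

Lemma sum_bound f N : exists C : R, forall n,
  `|\sum_(l < N) f`_l * dd n l| <= C * n%:R^-1.
Proof.
elim: N => [|N [C hC]].
  by exists 0 => n; rewrite big_ord0 normr0 mul0r.
have [C' hC'] := dd_bound N.
exists (C + `|f`_N| * C') => n; rewrite big_ord_recr /=.
apply: le_trans (ler_normD _ _) _; rewrite mulrDl; apply: lerD => //.
rewrite normrM -mulrA; apply: ler_wpM2l => //.
Qed.

Lemma conv f : (fun n : nat => Normc.normc (nu_poly_integral (pseq P i n) n f
                          - (eta_poly_integral P A w m i n f)%:C%C))
       @ \oo --> (0 : R).
Proof.
have [C hC] := sum_bound f (size f).
apply: (@lim_bound _ _ C).
  by move=> n; rewrite key normc_real.
by move=> n; rewrite key normc_real.
Qed.

End Final.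

Theorem theorem4 (R : realType) (r : nat) (hr : (0 < r)%N)
    (mu : 'I_r -> {measure set R -> \bar R})
    (hmom : forall j, finite_moments (mu j))
    (hperf : perfect mu)
    (P : ('I_r -> nat) -> {poly R}) (hP : forall n, typeII mu n (P n))
    (A : ('I_r -> nat) -> 'I_r -> {poly R}) (hA : forall n, typeI mu n (A n))
    (m : {measure set R -> \bar R}) (w : 'I_r -> R -> R)
    (hw : forall j, is_density (mu j) m (w j))
    (i : nat -> 'I_r)
    (J : nat -> nat -> R)
    (hJ : forall l, 'X * pseq P i l = \sum_(k < l.+2) J l k *: pseq P i k)
    (hJ0 : forall l k, (l.+1 < k)%N -> J l k = 0)
    (hbd : forall Rad : nat, exists M : R, forall a b : nat,
        (a <= b + Rad)%N -> (b <= a + Rad)%N -> `|J a b| <= M) :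
  (forall l : nat,
     (fun n : nat => Normc.normc (nu_poly_integral (pseq P i n) n 'X^l
                          - (eta_poly_integral P A w m i n 'X^l)%:C%C))
       @ \oo --> (0 : R)) /\
  (forall f : {poly R},
     (fun n : nat => Normc.normc (nu_poly_integral (pseq P i n) n f
                          - (eta_poly_integral P A w m i n f)%:C%C))
       @ \oo --> (0 : R)).
Proof.
split.
  by move=> l; exact: (conv hmom hP hA hw hJ hJ0 hbd).
by move=> f; exact: (conv hmom hP hA hw hJ hJ0 hbd).
Qed.
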